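(* Let $\mathcal L_{\mathcal N}=(\mathcal L,[\cdot_\lambda\cdot]_{\mathcal L},\mathcal N)$ and $\mathcal H_{\mathcal Q}=(\mathcal H,[\cdot_\lambda\cdot]_{\mathcal H},\mathcal Q)$ be Nijenhuis Lie conformal algebras, let $0\to\mathcal H_{\mathcal Q}\xrightarrow{inc}\mathcal E_{\mathcal R}\xrightarrow{proj}\mathcal L_{\mathcal N}\to0$ be a non-abelian extension with section $s$, and let $(\chi_\lambda,\rho,\Phi)$ be the non-abelian $2$-cocycle induced by $s$. A pair $(\alpha,\beta)\in\mathrm{Aut}(\mathcal H_{\mathcal Q})\times\mathrm{Aut}(\mathcal L_{\mathcal N})$ is inducible if and only if the non-abelian $2$-cocycles $(\chi_\lambda,\rho,\Phi)$ and $(\chi^{(\alpha,\beta)}_\lambda,\rho^{(\alpha,\beta)},\Phi^{(\alpha,\beta)})$ are equivalent; in other words, if and only if the Wells map vanishes at $(\alpha,\beta)$.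
   Context: All spaces over $\mathbb C$. A Lie conformal algebra is a $\mathbb C[\partial]$-module with a $\mathbb C$-bilinear $\lambda$-bracket satisfying $[\partial a_\lambda b]=-\lambda[a_\lambda b]$, $[a_\lambda\partial b]=(\partial+\lambda)[a_\lambda b]$, $[a_\lambda b]=-[b_{-\partial-\lambda}a]$, $[a_\lambda[b_\mu c]]=[[a_\lambda b]_{\lambda+\mu}c]+[b_\mu[a_\lambda c]]$. A Nijenhuis operator is a $\mathbb C[\partial]$-linear $\mathcal N$ with $[\mathcal N(p)_\lambda\mathcal N(q)]=\mathcal N([\mathcal N(p)_\lambda q]+[p_\lambda\mathcal N(q)]-\mathcal N([p_\lambda q]))$; a Nijenhuis Lie conformal algebra is a Lie conformal algebra with a Nijenhuis operator; morphisms are bracket-preserving $\mathbb C[\partial]$-linear maps intertwining the operators; $\mathrm{Aut}$ denotes bijective self-morphisms. A non-abelian extension: a Nijenhuis Lie conformal algebra $\mathcal E_{\mathcal R}=(\mathcal E,[\cdot_\lambda\cdot]_{\mathcal E},\mathcal R)$ with a short exact sequence of morphisms as displayed, split as $\mathbb C[\partial]$-modules; $\mathcal H\subset\mathcal E$, $\mathcal R|_{\mathcal H}=\mathcal Q$. A section is a $\mathbb C[\partial]$-linear $s$ with $proj\circ s=\mathrm{id}$; it induces $\chi_\lambda(p,q)=[s(p)_\lambda s(q)]_{\mathcal E}-s([p_\lambda q]_{\mathcal L})$, $\rho(p)_\lambda h=[s(p)_\lambda h]_{\mathcal E}$, $\Phi(p)=\mathcal R(s(p))-s(\mathcal N(p))$.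 A non-abelian $2$-cocycle is a triple $(\chi_\lambda:\mathcal L\otimes\mathcal L\to\mathcal H[\lambda],\ \rho:\mathcal L\otimes\mathcal H\to\mathcal H[\lambda],\ \Phi:\mathcal L\to\mathcal H)$ satisfying, for $p,q,r\in\mathcal L$, $h\in\mathcal H$: (i) $\rho(p)_\lambda\rho(q)_\mu h-\rho(q)_\mu\rho(p)_\lambda h-\rho([p_\lambda q]_{\mathcal L})_{\lambda+\mu}h=[\chi_\lambda(p,q)_{\lambda+\mu}h]_{\mathcal H}$; (ii) $\rho(p)_\lambda\chi_\mu(q,r)+\rho(q)_\mu\chi_\lambda(r,p)+\rho(r)_{-\partial-\lambda-\mu}\chi_\lambda(p,q)-\chi_{\lambda+\mu}([q_\mu r]_{\mathcal L},p)-\chi_{\lambda+\mu}([r_{-\partial-\lambda}p]_{\mathcal L},q)-\chi_{\lambda+\mu}([p_\lambda q]_{\mathcal L},r)=0$; (iii) $\rho(\mathcal Np)_\lambda\mathcal Q(h)=\mathcal Q(\rho(\mathcal Np)_\lambda h+\rho(p)_\lambda\mathcal Q(h)-\mathcal Q(\rho(p)_\lambda h))+\mathcal Q([\Phi(p)_\lambda h]_{\mathcal H})-[\Phi(p)_\lambda\mathcal Q(h)]_{\mathcal H}$; (iv) $\chi_\lambda(\mathcal Np,\mathcal Nq)-\mathcal Q(\chi_\lambda(\mathcal Np,q)+\chi_\lambda(p,\mathcal Nq)-\mathcal Q\chi_\lambda(p,q))-\Phi([\mathcal N(p)_\lambda q]_{\mathcal L}+[p_\lambda\mathcal N(q)]_{\mathcal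 L}-\mathcal N[p_\lambda q]_{\mathcal L})+\rho(\mathcal Np)_\lambda\Phi(q)-\rho(\mathcal Nq)_{-\partial-\lambda}\Phi(p)+\mathcal Q(\rho(q)_{-\partial-\lambda}\Phi(p)-\rho(p)_\lambda\Phi(q)+\Phi([p_\lambda q]_{\mathcal L}))+[\Phi(p)_\lambda\Phi(q)]_{\mathcal H}=0$. Two such triples $(\chi,\rho,\Phi),(\chi',\rho',\Phi')$ are equivalent if there is a linear $\tau:\mathcal L\to\mathcal H$ with $\rho(p)_\lambda h-\rho'(p)_\lambda h=[\tau(p)_\lambda h]_{\mathcal H}$, $\chi_\lambda(p,q)-\chi'_\lambda(p,q)=[\tau(p)_\lambda\tau(q)]_{\mathcal H}-\tau([p_\lambda q]_{\mathcal L})+\rho'(p)_\lambda\tau(q)-\rho'(q)_{-\partial-\lambda}\tau(p)$, $\Phi(p)-\Phi'(p)=\mathcal Q\tau(p)-\tau\mathcal N(p)$; $H^2_{nab}(\mathcal L_{\mathcal N},\mathcal H_{\mathcal Q})$ is the set of equivalence classes. The twisted triple is $\chi^{(\alpha,\beta)}_\lambda(p,q)=\alpha\chi_\lambda(\beta^{-1}p,\beta^{-1}q)$, $\rho^{(\alpha,\beta)}(p)_\lambda h=\alpha(\rho(\beta^{-1}p)_\lambda\alpha^{-1}h)$, $\Phi^{(\alpha,\beta)}(p)=\alpha\Phi(\beta^{-1}p)$. The Wells map $\mathfrak W:\mathrm{Aut}(\mathcal H_{\mathcal Q})\times\mathrm{Aut}(\mathcal L_{\mathcal N})\to H^2_{nab}(\mathcal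 L_{\mathcal N},\mathcal H_{\mathcal Q})$ is $\mathfrak W(\alpha,\beta)=[(\chi^{(\alpha,\beta)}_\lambda,\rho^{(\alpha,\beta)},\Phi^{(\alpha,\beta)})-(\chi_\lambda,\rho,\Phi)]$; ''$\mathfrak W$ vanishes at $(\alpha,\beta)$'' means this class is trivial. Let $\mathrm{Aut}_{\mathcal H}(\mathcal E_{\mathcal R})=\{\gamma\in\mathrm{Aut}(\mathcal E_{\mathcal R}):\gamma(\mathcal H)=\mathcal H\}$ and $\Pi(\gamma)=(\gamma|_{\mathcal H},proj\circ\gamma\circ s)$; $(\alpha,\beta)$ is inducible if it lies in the image of $\Pi$. *)

(* Defs.v *)
From HB Require Import structures.
From mathcomp Require Import all_boot all_order all_algebra.
From mathcomp Require Import complex.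
From mathcomp Require Import reals.
Set Implicit Arguments. Unset Strict Implicit. Unset Printing Implicit Defensive.
Import Order.TTheory GRing.Theory Num.Theory.
Local Open Scope ring_scope.

(*   A C[d]-module is a K-vector space A (lmodType K) with a K-linear        *)
(*   endomorphism d.  An element of A[lambda] is a coefficient list           *)
(*   p : seq A (p`_i is the coefficient of lambda^i); two such lists denote   *)
(*   the same polynomial iff they have the same evaluations at every scalar   *)
(*   (K is infinite), so all polynomial identities are stated through        *)
(*   evaluation at scalars lambda = x, mu = y in K.                          *)

Section Defs.
Variable K : fieldType.

Definition klinear (A B : lmodType K) (f : A -> B) :=
  forall (k : K) (a b : A), f (k *: a + b) = k *: f a + f b.

Definition lev (A : lmodType K) (p : seq A) (x : K) : A :=
  \sum_(i < size p) x ^+ i *: p`_i.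

(* p(lambda) evaluated at lambda = -d - x, d acting on the coefficients,
   i.e. sum_i (-d - x)^i (p_i) *)
Definition levT (A : lmodType K) (d : A -> A) (p : seq A) (x : K) : A :=
  \sum_(i < size p) iter i (fun v => - d v - x *: v) p`_i.

(* A Nijenhuis Lie conformal algebra: carrier, derivation d, lambda-bracket
   [a_lambda b] (coefficient list), Nijenhuis operator N. *)
Record NLCA := MkNLCA {
  ncar : lmodType K;
  nd : ncar -> ncar;
  nbr : ncar -> ncar -> seq ncar;
  nN : ncar -> ncar }.

Definition is_LCA (A : lmodType K) (d : A -> A) (br : A -> A -> seq A) :=
  klinear d /\
  (forall b x, klinear (fun a => lev (br a b) x)) /\
  (forall a x, klinear (fun b => lev (br a b) x)) /\
  (forall a b x, lev (br (d a) b) x = - (x *: lev (br a b) x)) /\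
  (forall a b x, lev (br a (d b)) x = d (lev (br a b) x) + x *: lev (br a b) x) /\
  (forall a b x, lev (br a b) x = - levT d (br b a) x) /\
  (forall a b c x y,
     lev (br a (lev (br b c) y)) x =
     lev (br (lev (br a b) x) c) (x + y) + lev (br b (lev (br a c) x)) y).

Definition is_Nijenhuis (A : lmodType K) (d : A -> A) (br : A -> A -> seq A)
    (N : A -> A) :=
  [/\ klinear N, (forall a, N (d a) = d (N a)) &
      forall p q x, lev (br (N p) (N q)) x =
        N (lev (br (N p) q) x + lev (br p (N q)) x - N (lev (br p q) x))].

Definition is_NLCA (A : NLCA) :=
  is_LCA (@nd A) (@nbr A) /\ is_Nijenhuis (@nd A) (@nbr A) (@nN A).

Definition dlinear (A B : NLCA) (f : ncar A -> ncar B) :=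
  klinear f /\ forall a, f (nd a) = nd (f a).

Definition nmorph (A B : NLCA) (f : ncar A -> ncar B) :=
  [/\ dlinear f,
      (forall a b x, f (lev (nbr a b) x) = lev (nbr (f a) (f b)) x) &
      (forall a, f (nN a) = nN (f a))].

Definition naut (A : NLCA) (f g : ncar A -> ncar A) :=
  [/\ nmorph f, cancel f g & cancel g f].

Definition nab_extension (H E L : NLCA) (inc : ncar H -> ncar E)
    (proj : ncar E -> ncar L) :=
  is_NLCA H /\ is_NLCA E /\ is_NLCA L /\
  nmorph inc /\ nmorph proj /\
  injective inc /\ (forall p, exists e, proj e = p) /\
  (forall e, proj e = 0 <-> exists h, e = inc h).

Definition is_section (E L : NLCA) (proj : ncar E -> ncar L)
    (s : ncar L -> ncar E) :=
  dlinear s /\ forall p, proj (s p) = p.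

Definition induced_cocycle (H E L : NLCA) (inc : ncar H -> ncar E)
    (s : ncar L -> ncar E)
    (chi : ncar L -> ncar L -> seq (ncar H))
    (rho : ncar L -> ncar H -> seq (ncar H)) (Phi : ncar L -> ncar H) :=
  [/\ (forall p q x, inc (lev (chi p q) x) =
                     lev (nbr (s p) (s q)) x - s (lev (nbr p q) x)),
      (forall p h x, inc (lev (rho p h) x) = lev (nbr (s p) (inc h)) x) &
      (forall p, inc (Phi p) = nN (s p) - s (nN p))].

Definition cocycle_equiv (H L : NLCA)
    (chi : ncar L -> ncar L -> seq (ncar H))
    (rho : ncar L -> ncar H -> seq (ncar H)) (Phi : ncar L -> ncar H)
    (chi' : ncar L -> ncar L -> seq (ncar H))
    (rho' : ncar L -> ncar H -> seq (ncar H)) (Phi' : ncar L -> ncar H) :=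
  exists tau : ncar L -> ncar H, dlinear tau /\
   [/\ (forall p h x, lev (rho p h) x - lev (rho' p h) x = lev (nbr (tau p) h) x),
       (forall p q x, lev (chi p q) x - lev (chi' p q) x =
          lev (nbr (tau p) (tau q)) x - tau (lev (nbr p q) x)
          + lev (rho' p (tau q)) x - levT (@nd H) (rho' q (tau p)) x) &
       (forall p, Phi p - Phi' p = nN (tau p) - tau (nN p))].

Definition chi_tw (H L : NLCA) (a : ncar H -> ncar H) (bi : ncar L -> ncar L)
    (chi : ncar L -> ncar L -> seq (ncar H)) :=
  fun p q => map a (chi (bi p) (bi q)).
Definition rho_tw (H L : NLCA) (a ai : ncar H -> ncar H) (bi : ncar L -> ncar L)
    (rho : ncar L -> ncar H -> seq (ncar H)) :=
  fun p h => map a (rho (bi p) (ai h)).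
Definition Phi_tw (H L : NLCA) (a : ncar H -> ncar H) (bi : ncar L -> ncar L)
    (Phi : ncar L -> ncar H) :=
  fun p => a (Phi (bi p)).

Definition inducible (H E L : NLCA) (inc : ncar H -> ncar E)
    (proj : ncar E -> ncar L) (s : ncar L -> ncar E)
    (a : ncar H -> ncar H) (b : ncar L -> ncar L) :=
  exists gamma : ncar E -> ncar E,
    nmorph gamma /\ bijective gamma /\
    (forall h, exists h', gamma (inc h) = inc h') /\
    (forall h', exists h, gamma (inc h) = inc h') /\
    (forall h, gamma (inc h) = inc (a h)) /\
    (forall p, proj (gamma (s p)) = b p).

End Defs.

Notation Cplx R := (complex.complex (Real.sort R)).

(* Main.v *)
Require Import Defs.
From mathcomp Require Import all_boot all_order all_algebra complex reals.
From Stdlib Require Import IndefiniteDescription.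
Set Implicit Arguments. Unset Strict Implicit. Unset Printing Implicit Defensive.
Import Order.TTheory GRing.Theory Num.Theory.
Local Open Scope ring_scope.

Lemma poly_zero (K : numFieldType) (M : lmodType K) (N : nat) (D : nat -> M) :
  (forall x : K, \sum_(i < N) x ^+ i *: D i = 0) -> forall i, (i < N)%N -> D i = 0.
Proof.
move=> HD i0 lt_i0.
pose a : 'rV[K]_N := \row_j (j : nat)%:R.
pose V := Vandermonde N a.
have Vu : V \in unitmx.
  rewrite unitmxE det_Vandermonde unitfE; apply/prodf_neq0 => i _.
  apply/prodf_neq0 => j lt_ij; rewrite !mxE subr_eq0 eqr_nat.
  by apply/eqP => /val_inj eij; move: lt_ij; rewrite eij ltnn.
pose U := invmx V.
have VU := mulmxV Vu.
pose i : 'I_N := Ordinal lt_i0.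
have -> : D i0 = D i by [].
transitivity (\sum_(k < N) (1%:M : 'M[K]_N) k i *: D k).
  rewrite (bigD1 i) //= mxE eqxx scale1r big1 ?addr0 // => k nki.
  by rewrite mxE (negbTE nki) scale0r.
rewrite -VU.
under eq_bigr do rewrite mxE scaler_suml.
rewrite exchange_big /=.
rewrite big1 // => j _.
under eq_bigr do rewrite mulrC -scalerA.
rewrite -scaler_sumr.
have := HD (a 0 j).
rewrite /V /Vandermonde.
under [in X in _ -> X]eq_bigr do rewrite mxE.
by move=> ->; rewrite scaler0.
Qed.

Section KL.
Variable K : fieldType.
Implicit Types A B : lmodType K.

Lemma kl0 A B (f : A -> B) : klinear f -> f 0 = 0.
Proof.
move=> kl; have h := kl 1 0 0; rewrite !scale1r addr0 in h.
by apply: (addrI (f 0)); rewrite addr0 -h.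
Qed.
Lemma klD A B (f : A -> B) : klinear f -> forall a b, f (a + b) = f a + f b.
Proof. by move=> kl a b; have := kl 1 a b; rewrite !scale1r. Qed.
Lemma klZ A B (f : A -> B) : klinear f -> forall k a, f (k *: a) = k *: f a.
Proof. by move=> kl k a; have := kl k a 0; rewrite !addr0 (kl0 kl) addr0. Qed.
Lemma klN A B (f : A -> B) : klinear f -> forall a, f (- a) = - f a.
Proof. by move=> kl a; rewrite -scaleN1r (klZ kl) scaleN1r. Qed.
Lemma klB A B (f : A -> B) : klinear f -> forall a b, f (a - b) = f a - f b.
Proof. by move=> kl a b; rewrite klD // klN. Qed.
Lemma klsum A B (f : A -> B) : klinear f ->
  forall I (r : seq I) (P : pred I) (F : I -> A),
  f (\sum_(i <- r | P i) F i) = \sum_(i <- r | P i) f (F i).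
Proof.
move=> kl I r P F.
apply: (big_rec2 (fun y1 y2 => f y1 = y2)); first exact: kl0.
by move=> i y1 y2 _ <-; rewrite (klD kl).
Qed.
Lemma kl_comp A B (C : lmodType K) (f : A -> B) (g : B -> C) :
  klinear f -> klinear g -> klinear (fun a => g (f a)).
Proof. by move=> kf kg k a b; rewrite kf kg. Qed.

Lemma lev_big A (p : seq A) N x : (size p <= N)%N ->
  lev p x = \sum_(i < N) x ^+ i *: p`_i.
Proof.
move=> hle; transitivity (\sum_(i < N | (i < size p)%N) x ^+ i *: p`_i).
  by rewrite /lev; apply: (big_ord_widen _ (fun i => x ^+ i *: p`_i) hle).
rewrite big_mkcond; apply: eq_bigr => i _; case: ifP => // /negbT.
by rewrite -leqNgt => h; rewrite nth_default // scaler0.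
Qed.

Definition stepT A (d : A -> A) (x : K) := fun v : A => - d v - x *: v.

Lemma iter_kl A (d : A -> A) x n : klinear d -> klinear (iter n (stepT d x)).
Proof.
move=> kd; elim: n => [|n IH] k a b //=.
rewrite IH /stepT (kd k) !scalerDr !opprD addrACA.
by rewrite !scalerN !scalerA mulrC.
Qed.

Lemma levT_big A (d : A -> A) (p : seq A) N x : klinear d -> (size p <= N)%N ->
  levT d p x = \sum_(i < N) iter i (stepT d x) p`_i.
Proof.
move=> kd hle; transitivity (\sum_(i < N | (i < size p)%N) iter i (stepT d x) p`_i).
  by rewrite /levT; apply: (big_ord_widen _ (fun i => iter i (stepT d x) p`_i) hle).
rewrite big_mkcond; apply: eq_bigr => i _; case: ifP => // /negbT.
by rewrite -leqNgt => h; rewrite nth_default // (kl0 (iter_kl x i kd)).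
Qed.

Lemma lev_map A B (f : A -> B) (p : seq A) x : klinear f ->
  lev (map f p) x = f (lev p x).
Proof.
move=> kf; rewrite /lev size_map (klsum kf); apply: eq_bigr => i _.
by rewrite (klZ kf) (nth_map 0).
Qed.

Lemma levT_map A B (dA : A -> A) (dB : B -> B) (f : A -> B) (p : seq A) x :
  klinear f -> (forall a, f (dA a) = dB (f a)) ->
  levT dB (map f p) x = f (levT dA p x).
Proof.
move=> kf fd; rewrite /levT size_map (klsum kf); apply: eq_bigr => i _.
rewrite (nth_map 0) //; move: (p`_i) => y; elim: (nat_of_ord i) => [|n IH] //=.
by rewrite IH /stepT (klB kf) (klN kf) fd (klZ kf).
Qed.
End KL.

Section Coef.
Variable K : numFieldType.
Variable M : lmodType K.

Lemma lev_coef (p q r : seq M) :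
  (forall x, lev p x = lev q x + lev r x) -> forall i, p`_i = q`_i + r`_i.
Proof.
move=> h i; set N := maxn (size p) (maxn (size q) (size r)).
have hp : (size p <= N)%N by rewrite /N !leq_max leqnn ?orbT.
have hq : (size q <= N)%N by rewrite /N !leq_max leqnn ?orbT.
have hr : (size r <= N)%N by rewrite /N !leq_max leqnn ?orbT.
case: (ltnP i N) => [lt|ge].
  apply/eqP; rewrite -subr_eq0; apply/eqP.
  apply: (@poly_zero K M N (fun i => p`_i - (q`_i + r`_i))) lt => x.
  under eq_bigr do rewrite scalerBr scalerDr.
  by rewrite sumrB big_split /= -!lev_big // h subrr.
rewrite !nth_default ?addr0 //.
all: first [exact: leq_trans hp ge | exact: leq_trans hq ge | exact: leq_trans hr ge].
Qed.

Lemma levT_add (d : M -> M) (p q r : seq M) : klinear d ->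
  (forall x, lev p x = lev q x + lev r x) ->
  forall x, levT d p x = levT d q x + levT d r x.
Proof.
move=> kd h x; set N := maxn (size p) (maxn (size q) (size r)).
have hp : (size p <= N)%N by rewrite /N !leq_max leqnn ?orbT.
have hq : (size q <= N)%N by rewrite /N !leq_max leqnn ?orbT.
have hr : (size r <= N)%N by rewrite /N !leq_max leqnn ?orbT.
rewrite (levT_big x kd hp) (levT_big x kd hq) (levT_big x kd hr) -big_split.
by apply: eq_bigr => i _; rewrite (lev_coef h) (klD (iter_kl x i kd)).
Qed.

Lemma levT_eq (d : M -> M) (p q : seq M) : klinear d ->
  (forall x, lev p x = lev q x) -> forall x, levT d p x = levT d q x.
Proof.
move=> kd h x.
have e1 : levT d [::] x = 0 by rewrite /levT big_ord0.
have e2 : forall y, lev ([::] : seq M) y = 0 by move=> y; rewrite /lev big_ord0.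
by rewrite (@levT_add d p q [::] kd) ?e1 ?addr0 // => y; rewrite e2 addr0.
Qed.
End Coef.

Lemma naut_inv (K : fieldType) (A : NLCA K) (f g : ncar A -> ncar A) :
  naut f g -> nmorph g.
Proof.
move=> [[[kf df] bf Nf] c1 c2]; have fi := can_inj c1.
split; [split|..].
- by move=> k a b; apply: fi; rewrite kf !c2.
- by move=> a; apply: fi; rewrite df !c2.
- by move=> a b x; apply: fi; rewrite c2 bf !c2.
- by move=> a; apply: fi; rewrite Nf !c2.
Qed.

Lemma zid1 (V : zmodType) (a b c d s t : V) :
  a - s - (d - t) = a - b - (c - d) - (s - t) + (c - d) + (b - d).
Proof.
rewrite (addrAC (a - b - (c - d))) subrK (addrAC (a - b)) -(addrA a (- b)) addKr.
rewrite !opprB !addrA [a - s + t]addrAC [a - d + t]addrAC.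
by rewrite addrAC.
Qed.

Lemma zid2 (V : zmodType) (a b c d : V) : a - b - (c - d) = a - c - (b - d).
Proof. by rewrite !opprB !addrA [a - b + d]addrAC [a - c + d]addrAC addrAC. Qed.

Section KL2.
Variable K : fieldType.
Variables A B : lmodType K.
Lemma kl_add (f g : A -> B) : klinear f -> klinear g -> klinear (fun a => f a + g a).
Proof. by move=> kf kg k a b; rewrite kf kg scalerDr addrACA. Qed.
Lemma kl_opp (f : A -> B) : klinear f -> klinear (fun a => - f a).
Proof. by move=> kf k a b; rewrite kf opprD scalerN. Qed.
Lemma kl_sub (f g : A -> B) : klinear f -> klinear g -> klinear (fun a => f a - g a).
Proof. by move=> kf kg; apply: kl_add => //; apply: kl_opp. Qed.
Lemma kl_oppr : klinear (fun v : A => - v).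
Proof. by move=> k a b; rewrite opprD scalerN. Qed.
End KL2.

Ltac zcancel1 :=
  match goal with
  | |- context [GRing.add (GRing.add ?x ?p) (GRing.opp ?p)] => rewrite (addrK p x)
  | |- context [GRing.add (GRing.add ?x (GRing.opp ?p)) ?p] => rewrite (subrK p x)
  | |- context [GRing.add (GRing.opp ?p) ?p] => rewrite (addNr p)
  | |- context [GRing.add ?p (GRing.opp ?p)] => rewrite (subrr p)
  | |- context [GRing.add GRing.zero ?p] => rewrite (add0r p)
  | |- context [GRing.add ?p GRing.zero] => rewrite (addr0 p)
  end.
Ltac zmove q S :=
  first [ match S with context [GRing.add (GRing.add ?x q) ?y] =>
            lazymatch y with q => fail | _ => rewrite (addrAC x q y) end end
        | match S with context [GRing.add q ?y] =>
            lazymatch y with q => fail | _ => rewrite (addrC q y) end end ].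
Ltac zstep :=
  match goal with
  | |- GRing.add ?S (GRing.opp ?u) = _ => zmove u S
  | |- GRing.add ?S ?t = _ =>
    first [ match S with context [GRing.add (GRing.add ?x (GRing.opp t)) ?y] =>
              lazymatch y with GRing.opp t => fail | _ => rewrite (addrAC x (GRing.opp t) y) end end
          | match S with context [GRing.add (GRing.opp t) ?y] =>
              lazymatch y with GRing.opp t => fail | _ => rewrite (addrC (GRing.opp t) y) end end ]
  end.
Ltac zsolve :=
  apply/eqP; rewrite -subr_eq0; apply/eqP;
  rewrite ?(opprB, opprD, opprK, addrA);
  repeat (first [zcancel1 | zstep]); try reflexivity.

Lemma levT_sub (K : numFieldType) (M : lmodType K) (d : M -> M) (p q r : seq M) :
  klinear d -> (forall x, lev p x = lev q x - lev r x) ->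
  forall x, levT d p x = levT d q x - levT d r x.
Proof.
move=> kd h x.
have hopp : forall a, - d a = d (- a) by move=> a; rewrite (klN kd).
rewrite (levT_add (q := q) (r := map (fun v => - v) r) kd).
  by rewrite (levT_map (f := fun v => - v) _ x (@kl_oppr _ M) hopp).
by move=> y; rewrite (lev_map (f := fun v => - v) _ _ (@kl_oppr _ M)).
Qed.

Theorem theorem6p5 (R : realType)
  (H E L : NLCA (Cplx R))
  (inc : ncar H -> ncar E) (proj : ncar E -> ncar L) (s : ncar L -> ncar E)
  (chi : ncar L -> ncar L -> seq (ncar H))
  (rho : ncar L -> ncar H -> seq (ncar H)) (Phi : ncar L -> ncar H)
  (alpha alphai : ncar H -> ncar H) (beta betai : ncar L -> ncar L) :
  nab_extension inc proj ->
  is_section proj s ->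
  induced_cocycle inc s chi rho Phi ->
  naut alpha alphai -> naut beta betai ->
  (inducible inc proj s alpha beta <->
   cocycle_equiv chi rho Phi
     (chi_tw alpha betai chi) (rho_tw alpha alphai betai rho)
     (Phi_tw alpha betai Phi)).
Proof.
move=> [[[kdH [kl1H [kl2H [_ [_ [skH _]]]]]] [kNH _ _]]
        [[[kdE [kl1E [kl2E [_ [_ [skE _]]]]]] [kNE _ _]]
        [_ [[[kinc dinc] binc Ninc] [[[kproj dproj] bproj Nproj]
        [injinc [_ kerp]]]]]]].
move=> [[ks ds] ps] [cchi crho cphi] hA hB.
have [[[ka da] ba Na] ca1 ca2] := hA.
have [[[kb db] bb Nb] cb1 cb2] := hB.
have [[kai dai] bai Nai] := naut_inv hA.
have [[kbi dbi] bbi Nbi] := naut_inv hB.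
have pinc : forall h, proj (inc h) = 0 by move=> h; apply: (proj2 (kerp _)); exists h.
split.
- move=> [gam [[[kg dg] bg Ng] [_ [_ [_ [ginc gproj]]]]]].
  pose s' p := gam (s (betai p)).
  have ex : forall p, exists h, inc h = s p - s' p.
    move=> p; have [|h hh] := proj1 (kerp (s p - s' p)); last by exists h.
    by rewrite (klB kproj) gproj cb2 ps subrr.
  pose tau p := proj1_sig (constructive_indefinite_description _ (ex p)).
  have htau : forall p, inc (tau p) = s p - s' p.
    by move=> p; rewrite /tau; case: constructive_indefinite_description.
  have rho'E : forall p h x,
      inc (lev (rho_tw alpha alphai betai rho p h) x) = lev (nbr (s' p) (inc h)) x.
    by move=> p h x; rewrite /rho_tw (lev_map _ _ ka) -ginc crho bg ginc ca2.
  exists tau; split; first split.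
  + move=> k a b; apply: injinc; rewrite (kinc k) !htau ks /s' kbi ks kg.
    by rewrite scalerBr opprD addrACA.
  + by move=> a; apply: injinc; rewrite dinc !htau (klB kdE) ds /s' dbi ds dg.
  split.
  + move=> p h x; apply: injinc.
    by rewrite (klB kinc) crho rho'E binc htau (klB (kl1E _ _)).
  + move=> p q x; apply: injinc.
    rewrite !(klD kinc) !(klN kinc) cchi /chi_tw (lev_map _ _ ka) -ginc cchi.
    rewrite (klB kg) bg -bbi binc rho'E.
    rewrite -(levT_map _ _ kinc dinc).
    rewrite (levT_eq (q := nbr (s' q) (inc (tau p))) kdE); last first.
      by move=> y; rewrite (lev_map _ _ kinc) rho'E.
    rewrite -skE !htau -/(s' p) -/(s' q) -/(s' (lev (nbr p q) x)).
    rewrite !(klB (kl1E _ _)) !(klB (kl2E _ _)).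
    exact: zid1.
  + move=> p; apply: injinc.
    rewrite (klB kinc) cphi /Phi_tw -ginc cphi (klB kg) Ng -/(s' p) -Nbi -/(s' (nN p)).
    by rewrite (klB kinc) Ninc !htau (klB kNE) zid2.
move=> [tau [[ktau dtau] [e1 e2 e3]]].
have exk : forall e, exists h, inc h = e - s (proj e).
  move=> e; have [|h hh] := proj1 (kerp (e - s (proj e))); last by exists h.
  by rewrite (klB kproj) ps subrr.
pose kk e := proj1_sig (constructive_indefinite_description _ (exk e)).
have hk : forall e, inc (kk e) = e - s (proj e).
  by move=> e; rewrite /kk; case: constructive_indefinite_description.
have decomp : forall e, e = inc (kk e) + s (proj e) by move=> e; rewrite hk subrK.
have pis : forall h p, proj (inc h + s p) = p.
  by move=> h p; rewrite (klD kproj) pinc ps add0r.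
have kis : forall h p, kk (inc h + s p) = h.
  by move=> h p; apply: injinc; rewrite hk pis addrK.
have kkl : klinear kk.
  by move=> k a b; apply: injinc; rewrite (kinc k) !hk kproj ks scalerBr opprD addrACA.
have kkd : forall e, kk (nd e) = nd (kk e).
  by move=> e; apply: injinc; rewrite dinc !hk dproj ds (klB kdE).
have s0 : s 0 = 0 by apply: kl0 ks.
have b0 : beta 0 = 0 by apply: kl0 kb.
have t0 : tau 0 = 0 by apply: kl0 ktau.
pose gam e := inc (alpha (kk e) - tau (beta (proj e))) + s (beta (proj e)).
have gamE : forall h p, gam (inc h + s p) = inc (alpha h - tau (beta p)) + s (beta p).
  by move=> h p; rewrite /gam kis pis.
have ginc : forall h, gam (inc h) = inc (alpha h).
  by move=> h; rewrite -[inc h]addr0 -s0 gamE b0 t0 s0 subr0 addr0.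
have gs : forall p, gam (s p) = inc (- tau (beta p)) + s (beta p).
  by move=> p; rewrite -[s p]add0r -(kl0 kinc) gamE (kl0 ka) add0r.
have brk : forall h1 p1 h2 p2 x,
    lev (nbr (inc h1 + s p1) (inc h2 + s p2)) x =
    inc (lev (nbr h1 h2) x - levT (@nd _ H) (rho p2 h1) x + lev (rho p1 h2) x
         + lev (chi p1 p2) x) + s (lev (nbr p1 p2) x).
  move=> h1 p1 h2 p2 x; rewrite (klD (kl1E _ _)) !(klD (kl2E _ _)).
  rewrite !(klD kinc) (klN kinc) binc crho cchi -(levT_map _ _ kinc dinc).
  rewrite (levT_eq (q := nbr (s p2) (inc h1)) kdE); last first.
    by move=> y; rewrite (lev_map _ _ kinc) crho.
  by rewrite -skE -[in RHS]addrA subrK !addrA.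
have Ndec : forall h p, nN (inc h + s p) = inc (nN h + Phi p) + s (nN p).
  by move=> h p; rewrite (klD kNE) (klD kinc) Ninc cphi -addrA subrK.
pose rho' := rho_tw alpha alphai betai rho.
have rl : forall p x, klinear (fun h => lev (rho p h) x).
  by move=> p x k a b; apply: injinc; rewrite (kinc k) !crho (kinc k) (kl2E _ _ k).
have r'E : forall P g x, lev (rho' P g) x = alpha (lev (rho (betai P) (alphai g)) x).
  by move=> P g x; rewrite /rho' /rho_tw (lev_map _ _ ka).
have r'l : forall P x, klinear (fun g => lev (rho' P g) x).
  by move=> P x k a b; rewrite !r'E (kai k) (rl _ _ k) (ka k).
have r'T : forall P g1 g2 x, levT (@nd _ H) (rho' P (g1 - g2)) x =
    levT (@nd _ H) (rho' P g1) x - levT (@nd _ H) (rho' P g2) x.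
  by move=> P g1 g2 x; apply: levT_sub kdH _ _ => y; rewrite (klB (r'l _ _)).
have F1 : forall P g x, lev (rho P g) x = lev (rho' P g) x + lev (nbr (tau P) g) x.
  by move=> P g x; rewrite -e1 addrC subrK.
have F1T : forall P g x, levT (@nd _ H) (rho P g) x =
    levT (@nd _ H) (rho' P g) x - lev (nbr g (tau P)) x.
  move=> P g x.
  by rewrite (levT_add (q := rho' P g) (r := nbr (tau P) g) kdH (F1 P g)) skH opprK.
have F2 : forall P1 P2 x, lev (chi P1 P2) x = lev (chi_tw alpha betai chi P1 P2) x +
   (lev (nbr (tau P1) (tau P2)) x - tau (lev (nbr P1 P2) x)
    + lev (rho' P1 (tau P2)) x - levT (@nd _ H) (rho' P2 (tau P1)) x).
  by move=> P1 P2 x; rewrite -e2 addrC subrK.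
have F3 : forall P, Phi P = Phi_tw alpha betai Phi P + (nN (tau P) - tau (nN P)).
  by move=> P; rewrite -e3 addrC subrK.
have R'E : forall p h, map alpha (rho p h) = rho' (beta p) (alpha h).
  by move=> p h; rewrite /rho' /rho_tw cb1 ca1.
have C'E : forall p1 p2, map alpha (chi p1 p2) = chi_tw alpha betai chi (beta p1) (beta p2).
  by move=> p1 p2; rewrite /chi_tw !cb1.
exists gam; split; last split; last split; last split; last split.
- split; [split|..].
  + apply: (kl_add (kl_comp (kl_sub (kl_comp kkl ka)
                                     (kl_comp (kl_comp kproj kb) ktau)) kinc)
                   (kl_comp (kl_comp kproj kb) ks)).
  + move=> e; rewrite /gam kkd dproj db da dtau ds -(klB kdH) dinc -(klD kdE).
    by [].
  + move=> a b x; rewrite (decomp a) (decomp b).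
    move: (kk a) (proj a) (kk b) (proj b) => h1 p1 h2 p2.
    rewrite !gamE !brk gamE bb; congr (inc _ + _).
    rewrite !(klD ka) !(klN ka) ba -(levT_map _ _ ka da) -!(lev_map _ _ ka).
    rewrite !R'E C'E F1T F1 F2 !(klB (r'l _ _)) r'T.
    rewrite !(klB (kl1H _ _)) !(klB (kl2H _ _)).
    zsolve.
  + move=> e; rewrite (decomp e); move: (kk e) (proj e) => h p.
    rewrite Ndec !gamE Ndec Nb; congr (inc _ + _).
    rewrite (F3 (beta p)) /Phi_tw cb1 (klD ka) Na (klB kNH).
    zsolve.
- pose g' e := inc (alphai (kk e + tau (proj e))) + s (betai (proj e)).
  exists g' => e; rewrite (decomp e); move: (kk e) (proj e) => h p.
    by rewrite gamE /g' kis pis subrK ca1 cb1.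
  by rewrite /g' kis pis gamE ca2 cb2 addrK.
- by move=> h; exists (alpha h).
- by move=> h; exists (alphai h); rewrite ginc ca2.
- exact: ginc.
- by move=> p; rewrite gs pis.
Qed.
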